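(* Let $X$ be compact Hausdorff, $(H,e)$ a unital Hilbert space, and $T:C(X)\to H$ a unital positive linear map whose associated probability measure $\mu$ (defined by $(Tv,e)=\int v\,d\mu$) is atomic with finite support. Then $T$ is separable. In particular, for every $n$, every unital positive linear map $T:\ell^\infty(n)\to H$ is separable and satisfies $T^{(m)}(M_m(\ell^\infty(n))_+)\subseteq\max\mathfrak c_e$ for all $m$.
   Context: A Hilbert $*$-space is a complex Hilbert space (inner product linear in the first variable) with a conjugate-linear $\zeta\mapsto\zeta^*$, $\zeta^{**}=\zeta$, $(\zeta^*,\eta^* )=\overline{(\zeta,\eta)}$. A unital Hilbert space $(H,e)$ has a fixed hermitian unit vector $e$ and cone $\mathfrak c_e=\{\zeta\in H_h:\|\zeta\|\le\sqrt2(\zeta,e)\}$. $T:C(X)\to H$ is unital positive if $T(1)=e$, $T(C(X)_+)\subseteq\mathfrak c_e$. $T$ is separable if there are positive Radon measures $q_l$ and $p_l\in\mathfrak c_e$ with $Tv=\lim_k\sum_{l\le k}(\int v\,dq_l)p_l$ for all $v$. $\ell^\infty(n)=C(\{1,\dots,n\})$; $M_m(\ell^\infty(n))_+$ are matrices positive semidefinite at each point; $T^{(m)}[v_{ij}]=[Tv_{ij}]$. $\max\mathfrak c_e$: with $\overline H$ the conjugate space, $\mathfrak c_e^\boxdot=\{\bar\eta\in M_n(\overline H)_h:[(\xi,\eta_{st})]\ge0\ \forall\xi\in\mathfrak c_e\}$, $\max\mathfrak c_e\cap M_m(H)=\{\zeta\in M_m(H)_h:[(\zeta_{ik},\eta_{jl})]_{(i,j),(k,l)}\ge0\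 \forall\bar\eta\in\mathfrak c_e^\boxdot\}$, matrices carrying the involution $[x_{ij}]^*=[x_{ji}^*]$. *)

(* Defs.v *)
From HB Require Import structures.
From mathcomp Require Import all_boot all_order all_algebra.
From mathcomp Require Import all_classical all_reals all_analysis.
From mathcomp Require Import complex.

Set Implicit Arguments.
Unset Strict Implicit.
Unset Printing Implicit Defensive.

Import Order.TTheory GRing.Theory Num.Theory.
Import numFieldNormedType.Exports.

Local Open Scope classical_set_scope.
Local Open Scope ring_scope.

(* [ip] is the inner product (linear in the first variable), [hs] the  *)
(* conjugate-linear involution zeta |-> zeta^*.                        *)

Section HilbertStar.
Variables (R : realType) (H : lmodType R[i]).
Variables (ip : H -> H -> R[i]) (hs : H -> H).

Definition hnorm (x : H) : R := Num.sqrt (complex.Re (ip x x)).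

Record hilbert_star_space : Prop := HilbertStarSpace {
  ip_linl : forall (a : R[i]) (x y z : H), ip (a *: x + y) z = a * ip x z + ip y z;
  ip_conj : forall x y : H, ip y x = (ip x y)^*;
  ip_ge0 : forall x : H, 0 <= ip x x;
  ip_eq0 : forall x : H, ip x x = 0 -> x = 0;
  ip_complete : forall u : nat -> H,
    (forall eps : R, 0 < eps -> exists N : nat, forall m n : nat,
        (N <= m)%N -> (N <= n)%N -> hnorm (u m - u n) < eps) ->
    exists l : H, (fun k => hnorm (u k - l)) @ \oo --> (0 : R);
  hs_semilinear : forall (a : R[i]) (x y : H), hs (a *: x + y) = a^* *: hs x + hs y;
  hs_invol : forall x : H, hs (hs x) = x;
  hs_ip : forall x y : H, ip (hs x) (hs y) = (ip x y)^* }.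

Definition unital_vector (e : H) : Prop := hs e = e /\ hnorm e = 1.

Definition cone_e (e : H) (z : H) : Prop :=
  hs z = z /\ ((hnorm z)%:C)%C <= ((Num.sqrt 2)%:C)%C * ip z e.

Definition psd (I : finType) (A : I -> I -> R[i]) : Prop :=
  forall x : I -> R[i], 0 <= \sum_(i : I) \sum_(j : I) (x i)^* * A i j * x j.

(* the dual cone c_e^boxdot at level n: eta_bar in M_n(conj H)_h, i.e.
   eta_{st} = (eta_{ts})^*, with [(xi, eta_st)] >= 0 for all xi in c_e *)
Definition dual_cone_e (e : H) (n : nat) (eta : 'I_n -> 'I_n -> H) : Prop :=
  (forall s t, eta s t = hs (eta t s)) /\
  forall xi : H, cone_e e xi -> psd (fun s t => ip xi (eta s t)).

Definition max_cone_e (e : H) (m : nat) (zeta : 'I_m -> 'I_m -> H) : Prop :=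
  (forall i k, zeta i k = hs (zeta k i)) /\
  forall (n : nat) (eta : 'I_n -> 'I_n -> H), dual_cone_e e eta ->
    psd (fun (a b : 'I_m * 'I_n) => ip (zeta a.1 b.1) (eta a.2 b.2)).

End HilbertStar.

Section CX.
Variables (R : realType) (X : ptopologicalType).

Definition cts (v : X -> R[i]) : Prop :=
  continuous (fun x => complex.Re (v x)) /\ continuous (fun x => complex.Im (v x)).

Definition borelX := g_sigma_algebraType (@open X).

Definition radon (mu : {measure set borelX -> \bar R}) : Prop :=
  (mu setT < +oo)%E /\
  (forall A : set borelX, measurable A ->
     mu A = ereal_inf [set mu U | U in [set U : set X | open U /\ A `<=` U]]) /\
  (forall A : set borelX, measurable A ->
     mu A = ereal_sup [set mu K | K in [set K : set X | compact K /\ K `<=` A]]).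

Definition cint (mu : {measure set borelX -> \bar R}) (v : X -> R[i]) : R[i] :=
  (fine (\int[mu]_x (complex.Re (v x))%:E) +i* fine (\int[mu]_x (complex.Im (v x))%:E))%C.

Variables (H : lmodType R[i]) (ip : H -> H -> R[i]) (hs : H -> H) (e : H).

Definition unital_positive (T : (X -> R[i]) -> H) : Prop :=
  (forall (a : R[i]) (u v : X -> R[i]), cts u -> cts v ->
      T (fun x => a * u x + v x) = a *: T u + T v) /\
  T (fun _ => 1) = e /\
  (forall v, cts v -> (forall x, 0 <= v x) -> cone_e ip hs e (T v)).

Definition separable_map (T : (X -> R[i]) -> H) : Prop :=
  exists (q : nat -> {measure set borelX -> \bar R}) (p : nat -> H),
    (forall l, radon (q l)) /\ (forall l, cone_e ip hs e (p l)) /\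
    forall v, cts v ->
      (fun k => hnorm ip (T v - \sum_(l < k) cint (q l) v *: p l)) @ \oo --> (0 : R).

Definition assoc_measure_finite_atomic (T : (X -> R[i]) -> H) : Prop :=
  exists mu : {measure set borelX -> \bar R},
    radon mu /\ mu setT = 1%E /\
    (forall v, cts v -> ip (T v) e = cint mu v) /\
    exists F : set X, finite_set F /\ mu (~` F) = 0%E.

End CX.

(* l^infty(n) = C({1,...,n}): the n-point discrete space, modelled by
   'I_n.-1.+1 (which is 'I_n whenever n > 0; the statement assumes 0 < n,
   the case n = 0 being vacuous).  'I_n.-1.+1 is pointed,
   which MathComp-Analysis' measure theory requires. *)
Definition linfty (n : nat) : Type := 'I_n.-1.+1.
HB.instance Definition _ n := Choice.on (linfty n).
HB.instance Definition _ n := isPointed.Build (linfty n) ord0.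
HB.instance Definition _ n :=
  DiscreteTopology.copy (linfty n) (discrete_topology 'I_n.-1.+1).

(* Main.v *)
Require Import Defs.
From HB Require Import structures.
From mathcomp Require Import all_boot all_order all_algebra.
From mathcomp Require Import all_classical all_reals all_analysis.
From mathcomp Require Import complex.
From mathcomp Require Import ring lra.
From mathcomp Require Import measurable_realfun.
From mathcomp Require Import finmap.
Set Implicit Arguments.
Unset Strict Implicit.
Unset Printing Implicit Defensive.
Import Order.TTheory GRing.Theory Num.Theory.
Import numFieldNormedType.Exports.
Local Open Scope ring_scope.
Section PSD.
Variable C : numClosedFieldType.

Definition Qf (I : finType) (A : I -> I -> C) (x y : I -> C) : C :=
  \sum_(i : I) \sum_(j : I) (x i)^* * A i j * y j.

Definition psdC (I : finType) (A : I -> I -> C) : Prop :=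
  forall x : I -> C, 0 <= \sum_(i : I) \sum_(j : I) (x i)^* * A i j * x j.

Lemma sum_dl (I : finType) (i : I) (F : I -> C) :
  \sum_j ((j == i)%:R * F j) = F i.
Proof.
rewrite (bigD1 i) //= eqxx mul1r big1 ?addr0 // => j /negbTE ->.
by rewrite mul0r.
Qed.

Lemma sum_dr (I : finType) (i : I) (F : I -> C) :
  \sum_j (F j * (j == i)%:R) = F i.
Proof. by rewrite -[RHS](sum_dl i); apply: eq_bigr => j _; rewrite mulrC. Qed.

Variable I : finType.
Implicit Types (A : I -> I -> C) (x y : I -> C).

Lemma QDl A x1 x2 y : Qf A (fun j => x1 j + x2 j) y = Qf A x1 y + Qf A x2 y.
Proof.
rewrite /Qf -big_split; apply: eq_bigr => i _; rewrite -big_split.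
by apply: eq_bigr => j _; rewrite rmorphD /= !mulrDl.
Qed.

Lemma QDr A x y1 y2 : Qf A x (fun j => y1 j + y2 j) = Qf A x y1 + Qf A x y2.
Proof.
rewrite /Qf -big_split; apply: eq_bigr => i _; rewrite -big_split.
by apply: eq_bigr => j _; rewrite mulrDr.
Qed.

Lemma Qdl A i a y :
  Qf A (fun j => (j == i)%:R * a) y = a^* * \sum_j A i j * y j.
Proof.
rewrite /Qf.
transitivity (\sum_k ((k == i)%:R * (a^* * \sum_j A k j * y j))).
  apply: eq_bigr => k _; rewrite [RHS]mulrA mulr_sumr; apply: eq_bigr => j _.
  by rewrite rmorphM /= conjC_nat !mulrA.
by rewrite sum_dl.
Qed.

Lemma Qdr A x k b :
  Qf A x (fun j => (j == k)%:R * b) = (\sum_i (x i)^* * A i k) * b.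
Proof.
rewrite /Qf mulr_suml; apply: eq_bigr => i _.
transitivity (\sum_j ((j == k)%:R * ((x i)^* * A i j * b))).
  by apply: eq_bigr => j _; rewrite mulrCA mulrA.
by rewrite sum_dl.
Qed.

Lemma Qdd A i k a b :
  Qf A (fun j => (j == i)%:R * a) (fun j => (j == k)%:R * b) = a^* * A i k * b.
Proof.
rewrite Qdl -mulrA; congr (_ * _).
by rewrite (eq_bigr (fun j => (j == k)%:R * (A i j * b))) ?sum_dl // => j _;
  rewrite mulrCA.
Qed.

Lemma psd_diag A i : psdC A -> 0 <= A i i.
Proof.
move=> /(_ (fun j => (j == i)%:R * 1)); rewrite -/(Qf _ _ _) Qdd.
by rewrite conjC1 mul1r mulr1.
Qed.

Lemma psd_pair A i k a b : psdC A ->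
  0 <= a^* * A i i * a + a^* * A i k * b + b^* * A k i * a + b^* * A k k * b.
Proof.
move=> /(_ (fun j => (j == i)%:R * a + (j == k)%:R * b)).
by rewrite -/(Qf _ _ _) !(QDl, QDr) !Qdd !addrA.
Qed.

Lemma psd_herm A i k : psdC A -> A k i = (A i k)^*.
Proof.
move=> pA.
have h1 := psd_pair i k 1 1 pA; have h2 := psd_pair i k 1 'i pA.
have dii := conj_Creal (ger0_real (psd_diag i pA)).
have dkk := conj_Creal (ger0_real (psd_diag k pA)).
have H1 := conj_Creal (ger0_real h1); have H2 := conj_Creal (ger0_real h2).
move: H1 H2; rewrite !rmorphD /= !rmorphM /= !conjCK !conjC1 !dii !dkk conjCi.
set a := A i k; set b := A k i => H1 H2.
rewrite !mul1r !mulr1 in H1 H2.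
have i2 : 'i * 'i = -1 :> C by rewrite -expr2 sqrCi.
have key : (a^* - b) * 2 =
  ((A i i + a^* + b^* + A k k) - (A i i + a + b + A k k)) +
  'i * ((A i i + a^* * - 'i + 'i * b^* + 'i * A k k * - 'i) -
        (A i i + a * 'i + - 'i * b + - 'i * A k k * 'i)) +
  ('i * 'i + 1) * (a^* - b^* + a - b) by ring.
move: key; rewrite H1 H2 i2 !subrr addNr mul0r mulr0 !addr0.
by move/eqP; rewrite mulf_eq0 pnatr_eq0 orbF subr_eq0 => /eqP ->.
Qed.
Lemma psd_row0 A s j : psdC A -> A s s = 0 -> A s j = 0.
Proof.
move=> pA ss0; have [->//|nsj] := eqVneq j s.
apply/eqP/negP => /negP a0.
set a := A s j in a0.
have a0' : a^* != 0 by rewrite conjC_eq0.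
set d := A j j.
have dr : d^* = d := conj_Creal (ger0_real (psd_diag j pA)).
set t := - (d + 1) / (2 * a^*).
have tc : t^* = - (d + 1) / (2 * a).
  by rewrite /t fmorph_div /= rmorphN rmorphD rmorphM /= dr conjC1 conjC_nat conjCK.
have := psd_pair s j t 1 pA.
rewrite ss0 (psd_herm s j pA) -/a -/d conjC1 mulr0 mul0r add0r !mul1r mulr1 tc /t.

rewrite mulr1.
have -> : - (d + 1) / (2 * a) * a + a^* * (- (d + 1) / (2 * a^*)) + d = -1.
  field.
  by apply/andP.
by rewrite ler0N1.
Qed.

Lemma psd_schur A s : psdC A -> A s s != 0 ->
  psdC (fun i j => A i j - A i s * A s j / A s s).
Proof.
move=> pA c0 x.
set c := A s s in c0 *.
have cr : c^* = c := conj_Creal (ger0_real (psd_diag s pA)).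
set c' := \sum_j A s j * x j.
have Hc : \sum_i (x i)^* * A i s = c'^*.
  rewrite /c' rmorph_sum; apply: eq_bigr => i _.
  by rewrite rmorphM /= (psd_herm s i pA) mulrC.
have -> : \sum_i \sum_j (x i)^* * (A i j - A i s * A s j / c) * x j =
    Qf A x x - c'^* * c' / c.
  rewrite /Qf -Hc /c' mulr_suml mulr_suml -sumrB; apply: eq_bigr => i _.
  rewrite mulr_sumr mulr_suml -sumrB; apply: eq_bigr => j _.
  by field.
set t := - c' / c.
have tc : t^* = - c'^* / c by rewrite /t fmorph_div /= rmorphN cr.
have := pA (fun j => x j + (j == s)%:R * t).
rewrite -/(Qf _ _ _) !(QDl, QDr) Qdr Qdl Qdd Hc -/c' -/c tc /t.
have -> : Qf A x x + c'^* * (- c' / c) +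
   (- c'^* / c * c' + - c'^* / c * c * (- c' / c)) = Qf A x x - c'^* * c' / c.
  by field.
by [].
Qed.

Lemma psd_ext (K : finType) (M M' : K -> K -> C) :
  (forall a b, M a b = M' a b) -> psdC M -> psdC M'.
Proof.
move=> e pM x; have := pM x; congr (_ <= _); apply: eq_bigr => a _.
by apply: eq_bigr => b _; rewrite e.
Qed.

Lemma psd_add (K : finType) (M1 M2 : K -> K -> C) :
  psdC M1 -> psdC M2 -> psdC (fun a b => M1 a b + M2 a b).
Proof.
move=> p1 p2 x; have := addr_ge0 (p1 x) (p2 x); rewrite -big_split.
congr (_ <= _); apply: eq_bigr => a _; rewrite -big_split.
by apply: eq_bigr => b _ /=; rewrite mulrDr mulrDl.
Qed.

Lemma psd_sum (K T : finType) (M : T -> K -> K -> C) :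
  (forall t, psdC (M t)) -> psdC (fun a b => \sum_t M t a b).
Proof.
move=> pM x.
suff -> : \sum_a \sum_b (x a)^* * (\sum_t M t a b) * x b =
    \sum_t \sum_a \sum_b (x a)^* * M t a b * x b.
  by apply: sumr_ge0 => t _; exact: pM.
rewrite [RHS]exchange_big; apply: eq_bigr => a _ /=.
rewrite [RHS]exchange_big; apply: eq_bigr => b _ /=.
by rewrite mulr_sumr mulr_suml.
Qed.

Lemma psd0 (K : finType) : psdC (fun _ _ : K => 0 : C).
Proof. by move=> x; apply: sumr_ge0 => a _; apply: sumr_ge0 => b _; rewrite mulr0 mul0r. Qed.

Lemma pairE (J : finType) (G : I * J -> C) :
  \sum_p G p = \sum_i \sum_j G (i, j).
Proof. by rewrite pair_bigA; apply: eq_bigr => -[]. Qed.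

Lemma sum3 (K L : finType) (p : K -> C) (m : C) (q : L -> C) :
  (\sum_i p i) * m * (\sum_k q k) = \sum_i \sum_k (p i * m * q k).
Proof.
rewrite mulr_suml mulr_suml; apply: eq_bigr => i _.
by rewrite mulr_sumr.
Qed.

Lemma psd_rank1 (J : finType) (u : I -> C) (w : C) (B : J -> J -> C) :
  0 <= w -> psdC B ->
  psdC (fun a b : I * J => u a.1 * (u b.1)^* * w * B a.2 b.2).
Proof.
move=> w0 pB x.
set y := fun l => \sum_k (u k)^* * x (k, l).
have yc : forall j, (y j)^* = \sum_i u i * (x (i, j))^*.
  by move=> j; rewrite rmorph_sum; apply: eq_bigr => i _; rewrite rmorphM /= conjCK.
suff -> : \sum_a \sum_b (x a)^* * (u a.1 * (u b.1)^* * w * B a.2 b.2) * x b =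
          w * \sum_j \sum_l (y j)^* * B j l * y l.
  exact: mulr_ge0.
transitivity (\sum_i \sum_j \sum_k \sum_l
   (w * ((u i * (x (i, j))^*) * B j l * ((u k)^* * x (k, l))))).
  rewrite pairE; apply: eq_bigr => i _; apply: eq_bigr => j _.
  rewrite pairE; apply: eq_bigr => k _; apply: eq_bigr => l _ /=.
  by ring.
rewrite mulr_sumr.
transitivity (\sum_j \sum_i \sum_l \sum_k
   (w * ((u i * (x (i, j))^*) * B j l * ((u k)^* * x (k, l))))).
  rewrite exchange_big; apply: eq_bigr => j _; apply: eq_bigr => i _.
  by rewrite exchange_big.
apply: eq_bigr => j _; rewrite mulr_sumr exchange_big; apply: eq_bigr => l _.
by rewrite yc /y sum3 mulr_sumr; apply: eq_bigr => i _; rewrite mulr_sumr.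
Qed.

Lemma psd_kron (J : finType) (A : I -> I -> C) (B : J -> J -> C) :
  psdC A -> psdC B -> psdC (fun a b : I * J => A a.1 b.1 * B a.2 b.2).
Proof.
move=> pA pB.
suff H : forall n (S : {set I}) A, (#|S| <= n)%N -> psdC A ->
    (forall i j, i \notin S -> A i j = 0) ->
    psdC (fun a b : I * J => A a.1 b.1 * B a.2 b.2).
  by apply: (H _ [set: I] A (leqnn _) pA) => i j; rewrite inE.
elim=> [|n IH] S {}A cS {}pA sA.
  apply: (psd_ext _ (@psd0 _)) => a b.
  by rewrite sA ?mul0r //; move: cS; rewrite leqn0 cards_eq0 => /eqP ->; rewrite inE.
have sA' : forall i j, i \notin S -> A j i = 0.
  by move=> i j iS; rewrite (psd_herm i j pA) sA // conjC0.
have [S0|[s sS]] := set_0Vmem S.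
  apply: (psd_ext _ (@psd0 _)) => a b.
  by rewrite sA ?mul0r // S0 inE.
have cS' : (#|S :\ s| <= n)%N by move: cS; rewrite (cardsD1 s S) sS.
have [ss0|ss0] := eqVneq (A s s) 0.
  apply: (IH (S :\ s) A cS' pA) => i j; rewrite in_setD1 negb_and negbK.
  by case/orP => [/eqP ->|/sA ->//]; exact: psd_row0.
set A' := fun i j => A i j - A i s * A s j / A s s.
have pA' : psdC A' := psd_schur pA ss0.
have sA'' : forall i j, i \notin S :\ s -> A' i j = 0.
  move=> i j; rewrite in_setD1 negb_and negbK /A'.
  case/orP => [/eqP ->|iS]; first by rewrite mulrAC divff // mul1r subrr.
  by rewrite (sA i j) // (sA i s) // !mul0r subrr.
have := psd_add (IH _ _ cS' pA' sA'')
  (psd_rank1 (fun i => A i s) (w := (A s s)^-1) (B := B) (ltac:(by rewrite invr_ge0; exact: psd_diag)) pB).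
apply: psd_ext => a b /=.
rewrite -(psd_herm b.1 s pA) /A'.
by rewrite -mulrDl subrK.
Qed.

End PSD.

Local Open Scope classical_set_scope.
Local Open Scope ring_scope.

Section Hil.
Variables (R : realType) (H : lmodType R[i]) (ip : H -> H -> R[i]) (hs : H -> H).
Hypothesis hH : hilbert_star_space ip hs.

Lemma ip0l z : ip 0 z = 0.
Proof.
have := ip_linl hH 1 0 0 z; rewrite scaler0 addr0 mul1r => h.
by apply: (@addrI _ (ip 0 z)); rewrite addr0; exact: esym h.
Qed.

Lemma ip_sum (T : Type) (r : seq T) (c : T -> R[i]) (p : T -> H) z :
  ip (\sum_(t <- r) c t *: p t) z = \sum_(t <- r) c t * ip (p t) z.
Proof.
elim: r => [|a r IH]; first by rewrite !big_nil ip0l.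
by rewrite !big_cons (ip_linl hH) IH.
Qed.

Lemma hs0 : hs 0 = 0.
Proof.
have := hs_semilinear hH 1 0 0; rewrite scaler0 addr0 conjC1 scale1r => h.
by apply: (@addrI _ (hs 0)); rewrite addr0; exact: esym h.
Qed.

Lemma hs_sum (T : Type) (r : seq T) (c : T -> R[i]) (p : T -> H) :
  hs (\sum_(t <- r) c t *: p t) = \sum_(t <- r) (c t)^* *: hs (p t).
Proof.
elim: r => [|a r IH]; first by rewrite !big_nil hs0.
by rewrite !big_cons (hs_semilinear hH) IH.
Qed.

Lemma hnorm0 : hnorm ip 0 = 0.
Proof. by rewrite /hnorm ip0l sqrtr0. Qed.

Lemma cone0 e : cone_e ip hs e 0.
Proof. by split; [exact: hs0 | rewrite hnorm0 ip0l mulr0]. Qed.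

Lemma cone_ip0 e z : cone_e ip hs e z -> ip z e = 0 -> z = 0.
Proof.
case=> _; move=> + h0; rewrite h0 mulr0 lecR => hn.
have : hnorm ip z = 0 by apply/eqP; rewrite eq_le hn sqrtr_ge0.
move/eqP; rewrite sqrtr_eq0 => hle.
apply: (ip_eq0 hH); have := ip_ge0 hH z; rewrite lecE /= => /andP[/eqP hi hr].
by apply/eqP; rewrite eq_complex /= hi eqxx andbT eq_le hle hr.
Qed.
End Hil.

Section Cts.
Variables (R : realType) (X : ptopologicalType).
Implicit Types (u v : X -> R[i]) (f g : X -> R).

Lemma rcD f g : continuous f -> continuous g -> continuous (fun x => f x + g x).
Proof. by move=> cf cg x; exact: (continuousD (cf x) (cg x)). Qed.
Lemma rcN f : continuous f -> continuous (fun x => - f x).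
Proof. by move=> cf x; exact: (continuousN (cf x)). Qed.
Lemma rcM f g : continuous f -> continuous g -> continuous (fun x => f x * g x).
Proof. by move=> cf cg x; exact: (continuousM (cf x) (cg x)). Qed.
Lemma rcC (c : R) : continuous (fun _ : X => c).
Proof. exact: cst_continuous. Qed.
Lemma rcmax f : continuous f -> continuous (fun x => Num.max (f x) 0).
Proof. move=> cf x; have h := (@continuous_max _ _ f (fun=> 0) x (cf x) (@cst_continuous X R^o 0 x)).
exact: h.
Qed.

Lemma cts_real f : continuous f -> cts (fun x => (f x)%:C%C).
Proof. by move=> cf; split => //=; exact: rcC. Qed.

Lemma cts_cst (c : R[i]) : cts (fun _ : X => c).
Proof. by split; exact: rcC. Qed.

Lemma ReD (a b : R[i]) : complex.Re (a + b) = complex.Re a + complex.Re b.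
Proof. by case: a; case: b. Qed.
Lemma ImD (a b : R[i]) : complex.Im (a + b) = complex.Im a + complex.Im b.
Proof. by case: a; case: b. Qed.
Lemma ReM (a b : R[i]) : complex.Re (a * b) =
  complex.Re a * complex.Re b - complex.Im a * complex.Im b.
Proof. by case: a; case: b. Qed.
Lemma ImM (a b : R[i]) : complex.Im (a * b) =
  complex.Re a * complex.Im b + complex.Im a * complex.Re b.
Proof. by case: a; case: b => * /=; rewrite addrC. Qed.

Lemma ctsD u v : cts u -> cts v -> cts (fun x => u x + v x).
Proof.
case=> [ru iu] [rv iv]; split.
  by rewrite (_ : (fun x => _) = fun x => complex.Re (u x) + complex.Re (v x));
    [exact: rcD | apply/funext => x; exact: ReD].
by rewrite (_ : (fun x => _) = fun x => complex.Im (u x) + complex.Im (v x));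
  [exact: rcD | apply/funext => x; exact: ImD].
Qed.

Lemma ctsM u v : cts u -> cts v -> cts (fun x => u x * v x).
Proof.
case=> [ru iu] [rv iv]; split.
  rewrite (_ : (fun x => _) = fun x => complex.Re (u x) * complex.Re (v x)
     + - (complex.Im (u x) * complex.Im (v x)));
    [by apply: rcD; [exact: rcM| apply: rcN; exact: rcM] | apply/funext => x; exact: ReM].
rewrite (_ : (fun x => _) = fun x => complex.Re (u x) * complex.Im (v x)
     + complex.Im (u x) * complex.Re (v x));
  [by apply: rcD; exact: rcM | apply/funext => x; exact: ImM].
Qed.

Lemma cts_sum (T : Type) (r : seq T) (c : T -> R[i]) (h : T -> X -> R[i]) :
  (forall t, cts (h t)) -> cts (fun x => \sum_(t <- r) c t * h t x).
Proof.
move=> ch; elim: r => [|a r IH].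
  by rewrite (_ : (fun x => _) = fun _ => 0); [exact: cts_cst | apply/funext => x; rewrite big_nil].
rewrite (_ : (fun x => _) = fun x => c a * h a x + \sum_(t <- r) c t * h t x).
  by apply: ctsD => //; apply: ctsM => //; exact: cts_cst.
by apply/funext => x; rewrite big_cons.
Qed.

Variables (H : lmodType R[i]) (ip : H -> H -> R[i]) (hs : H -> H) (e : H).
Variable T : (X -> R[i]) -> H.
Hypothesis hT : unital_positive ip hs e T.

Lemma T_lin a u v : cts u -> cts v -> T (fun x => a * u x + v x) = a *: T u + T v.
Proof. by case: hT => + _; apply. Qed.

Lemma T0 : T (fun _ => 0) = 0.
Proof.
have := @T_lin 1 _ _ (cts_cst 0) (cts_cst 0).
rewrite (_ : (fun _ => _) = fun _ => 0); last by apply/funext => x; rewrite mulr0 addr0.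
rewrite scale1r => h; by apply: (@addrI _ (T (fun _ => 0))); rewrite addr0; exact: esym h.
Qed.

Lemma T_add u v : cts u -> cts v -> T (fun x => u x + v x) = T u + T v.
Proof.
move=> cu cv; have := @T_lin 1 _ _ cu cv; rewrite scale1r => <-.
by congr T; apply/funext => x; rewrite mul1r.
Qed.

Lemma T_scale a u : cts u -> T (fun x => a * u x) = a *: T u.
Proof.
move=> cu; have := @T_lin a _ _ cu (cts_cst 0); rewrite T0 addr0 => <-.
by congr T; apply/funext => x; rewrite addr0.
Qed.

Lemma T_sum (I : Type) (r : seq I) (c : I -> R[i]) (h : I -> X -> R[i]) :
  (forall t, cts (h t)) ->
  T (fun x => \sum_(t <- r) c t * h t x) = \sum_(t <- r) c t *: T (h t).
Proof.
move=> ch; elim: r => [|a r IH].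
  rewrite big_nil -T0; congr T; apply/funext => x; by rewrite big_nil.
rewrite big_cons -IH -T_lin //; last exact: cts_sum.
by congr T; apply/funext => x; rewrite big_cons.
Qed.

End Cts.

Section Meas.
Variables (R : realType) (X : ptopologicalType).

Lemma borel_open (A : set X) : open A -> measurable (A : set (borelX X)).
Proof. by move=> oA; apply: sub_sigma_algebra. Qed.

Lemma borel_closed (A : set X) : closed A -> measurable (A : set (borelX X)).
Proof.
move=> cA; rewrite -[A]setCK; apply: measurableC; apply: borel_open.
by rewrite openC.
Qed.

Lemma borel_mfun (f : X -> R) : continuous f ->
  measurable_fun setT (f : borelX X -> R).
Proof.
move=> cf; apply: (measurability _ (RGenOpens.measurableE R)).
move=> _ [_ [a [b ->]] <-]; rewrite setTI; apply: borel_open.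
by move/continuousP: cf; apply; exact: interval_open.
Qed.

Lemma borel_mfunE (f : X -> R) (D : set X) : continuous f ->
  measurable_fun (D : set (borelX X)) (fun x : borelX X => (f x)%:E).
Proof.
move=> cf; apply/measurable_EFinP.
apply: (@measurable_funS _ _ (borelX X) _ setT) => //; exact: borel_mfun.
Qed.

Definition dm (x : X) : {measure set (borelX X) -> \bar R} := @dirac _ (borelX X) x R.

Lemma cint_dirac (x : X) (v : X -> R[i]) : cts v -> cint (dm x) v = v x.
Proof.
case=> cr ci; rewrite /cint /dm !integral_dirac //; try exact: borel_mfunE.
rewrite !diracE !in_setT -!EFinM /=; case: (v x) => a b /=; by rewrite !mul1r.
Qed.

Lemma radon_dirac (x : X) : hausdorff_space X -> radon (dm x).
Proof.
move=> hX; have cx : closed [set x] by apply: accessible_closed_set1; exact: hausdorff_accessible.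
have dE : forall A : set X, dm x A = ((x \in A)%:R)%:E by [].
split; first by rewrite dE in_setT ltry.
split => A mA; rewrite dE.
  have [Ax|nAx] := pselect (A x).
    rewrite mem_set //; apply/esym/eqP; rewrite eq_le; apply/andP; split.
      apply: ereal_inf_lbound; exists setT; first by split => //; exact: openT.
      by rewrite dE in_setT.
    by apply: le_ereal_inf_tmp => _ [U [oU AU] <-]; rewrite dE mem_set //; exact: AU.
  rewrite memNset //; apply/esym/eqP; rewrite eq_le; apply/andP; split.
    apply: ereal_inf_lbound; exists (~` [set x]).
      by split; [rewrite openC | move=> y Ay /= yx; apply: nAx; rewrite -yx].
    by rewrite dE memNset //=.
  by apply: le_ereal_inf_tmp => _ [U _ <-]; rewrite dE lee_fin ler0n.
have [Ax|nAx] := pselect (A x).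
  rewrite mem_set //; apply/esym/eqP; rewrite eq_le; apply/andP; split.
    by apply: ge_ereal_sup => _ [K _ <-]; rewrite dE lee_fin; case: (x \in K).
  apply: ereal_sup_ubound; exists [set x].
    by split; [exact: compact_set1 | move=> y ->].
  by rewrite dE mem_set.
rewrite memNset //; apply/esym/eqP; rewrite eq_le; apply/andP; split.
  apply: ge_ereal_sup => _ [K [_ KA] <-]; rewrite dE memNset //.
  by move=> Kx; apply: nAx; exact: KA.
apply: ereal_sup_ubound; exists set0; first by split; [exact: compact0 | done].
by rewrite dE memNset.
Qed.
End Meas.

Lemma sep_of_list (R : realType) (X : ptopologicalType) (H : lmodType R[i])
    (ip : H -> H -> R[i]) (hs : H -> H) (e : H) (T : (X -> R[i]) -> H)
    (s : seq X) (p : X -> H) :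
  hilbert_star_space ip hs -> hausdorff_space X ->
  (forall x, x \in s -> cone_e ip hs e (p x)) ->
  (forall v, cts v -> T v = \sum_(x <- s) v x *: p x) ->
  separable_map ip hs e T.
Proof.
move=> hH hX cp Tv.
pose q l := @dm R X (nth point s l).
pose p' l := if (l < size s)%N then p (nth point s l) else 0.
exists q, p'; split; first by move=> l; exact: radon_dirac.
split.
  move=> l; rewrite /p'; case: ifP => hl; [by apply: cp; exact: mem_nth | exact (cone0 hH e)].
move=> v cv; apply: cvg_near_cst; exists (size s) => // k /= hk.
suff -> : \sum_(l < k) cint (q l) v *: p' l = T v by rewrite subrr (hnorm0 hH).
rewrite Tv // (big_nth point) -(big_mkord xpredT (fun l => cint (q l) v *: p' l)).
rewrite (big_cat_nat (n := size s)) //=.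
rewrite [X in _ + X]big_nat_cond [X in _ + X]big1 ?addr0; last first.
  by move=> l /andP[/andP[hl _] _]; rewrite /p' ltnNge hl scaler0.
rewrite big_nat_cond [RHS]big_nat_cond; apply: eq_bigr => l /andP[/andP[_ hl] _].
by rewrite /q cint_dirac // /p' hl.
Qed.

Section Part2.
Variables (R : realType) (H : lmodType R[i]) (ip : H -> H -> R[i]) (hs : H -> H) (e : H).
Hypothesis hH : hilbert_star_space ip hs.
Variable n : nat.
Variable T : (linfty n -> R[i]) -> H.
Hypothesis hT : unital_positive ip hs e T.

Lemma disc_cts (v : linfty n -> R[i]) : cts v.
Proof. by split; apply/continuousP => A _; exact: discrete_open. Qed.

Definition dl (t : linfty n) : linfty n -> R[i] := fun s => ((s == t)%:R : R[i]).

Lemma T_decomp (v : linfty n -> R[i]) :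
  T v = \sum_(t : 'I_n.-1.+1) v t *: T (dl t).
Proof.
rewrite -(T_sum hT (index_enum 'I_n.-1.+1) v (h := dl)); last by move=> t; exact: disc_cts.
congr T; apply/funext => s; rewrite /dl.
rewrite -[LHS](sum_dr (s : 'I_n.-1.+1) v); apply: eq_bigr => t _; by rewrite eq_sym.
Qed.

Lemma cone_dl t : cone_e ip hs e (T (dl t)).
Proof. by case: hT => _ [_]; apply; [exact: disc_cts | move=> s; rewrite /dl ler0n]. Qed.

Lemma part2_sep : separable_map ip hs e T.
Proof.
apply: (@sep_of_list R (linfty n) H ip hs e T (index_enum 'I_n.-1.+1) (fun t => T (dl t))) => //.
- exact: discrete_hausdorff.
- by move=> x _; exact: cone_dl.
- by move=> v _; exact: T_decomp.
Qed.

Lemma part2_max m (v : 'I_m -> 'I_m -> linfty n -> R[i]) :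
  (forall t : linfty n, psd (fun i j => v i j t)) ->
  max_cone_e ip hs e (fun i j => T (v i j)).
Proof.
move=> pv; split.
  move=> i k; rewrite !T_decomp (hs_sum hH); apply: eq_bigr => t _.
  have [hp _] := cone_dl t; rewrite hp.
  by have := psd_herm k i (pv t : psdC _); rewrite /= => ->.
move=> N eta [_ deta].
apply: (psd_ext _ (psd_sum (fun t => psd_kron (pv t : psdC _) (deta _ (cone_dl t))))).
by move=> a b /=; rewrite T_decomp (ip_sum hH).
Qed.

End Part2.

Section Part1.
Variables (R : realType) (H : lmodType R[i]) (ip : H -> H -> R[i]) (hs : H -> H) (e : H).
Hypothesis hH : hilbert_star_space ip hs.
Variables (X : ptopologicalType) (T : (X -> R[i]) -> H).
Hypothesis hX : hausdorff_space X.
Hypothesis hT : unital_positive ip hs e T.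
Variable mu : {measure set borelX X -> \bar R}.
Variable F : set X.
Hypothesis hmu : forall v, cts v -> ip (T v) e = cint mu v.
Hypothesis fF : finite_set F.
Hypothesis muF : mu (~` F) = 0%E.

Lemma fin_closed (A : set X) : finite_set A -> closed A.
Proof.
move=> fA; have -> : A = \bigcup_(x in A) [set x].
  by apply/seteqP; split => [x Ax|x [y Ay ->]] //; exists x.
apply: closed_bigcup => // x _; apply: accessible_closed_set1.
exact: hausdorff_accessible.
Qed.

Lemma int_vanish (w : X -> R) : continuous w -> (forall x, 0 <= w x) ->
  (forall x, F x -> w x = 0) -> (\int[mu]_x (w x)%:E = 0)%E.
Proof.
move=> cw w0 wF.
have mF : measurable (F : set (borelX X)) by apply: borel_closed; exact: fin_closed.
have mFC : measurable (~` F : set (borelX X)) by exact: measurableC.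
rewrite -(setUCr F) ge0_integral_setU //.
- rewrite integral0_eq ?add0e; last by move=> x Fx; rewrite wF.
  apply: null_set_integral => //; exact: borel_mfunE.
- exact: borel_mfunE.
- by move=> x _; rewrite lee_fin.
- by rewrite disj_set2E setICr.
Qed.

Lemma T_pos0 (w : X -> R) : continuous w -> (forall x, 0 <= w x) ->
  (forall x, F x -> w x = 0) -> T (fun x => (w x)%:C%C) = 0.
Proof.
move=> cw w0 wF; apply: (cone_ip0 hH (e := e)).
  by case: hT => _ [_]; apply; [exact: cts_real | move=> x; rewrite ler0c].
rewrite hmu; last exact: cts_real.
rewrite /cint /= int_vanish //.
rewrite (_ : (\int[mu]_x (0 : R)%:E = 0)%E) //.
exact: integral0_eq.
Qed.

Lemma maxdec (y : R) : y = Num.max y 0 - Num.max (- y) 0.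
Proof.
have [y0|y0] := leP 0 y.
  have -> : Num.max (- y) 0 = 0 by apply/max_idPr; rewrite oppr_le0.
  by rewrite subr0.
have -> : Num.max (- y) 0 = - y by apply/max_idPl; rewrite oppr_ge0 ltW.
by rewrite sub0r opprK.
Qed.

Lemma T_real0 (w : X -> R) : continuous w ->
  (forall x, F x -> w x = 0) -> T (fun x => (w x)%:C%C) = 0.
Proof.
move=> cw wF.
have cp := rcmax cw; have cn := rcmax (rcN cw).
rewrite (_ : (fun x => _) = fun x => (-1) * (Num.max (- w x) 0)%:C%C + (Num.max (w x) 0)%:C%C); last first.
  apply/funext => x; rewrite {1}(maxdec (w x)).
  by rewrite mulN1r addrC; apply/eqP; rewrite eq_complex /= oppr0 addr0 !eqxx.
rewrite (T_lin hT); try exact: cts_real.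
rewrite (T_pos0 cn); first last.
- by move=> x Fx; rewrite /= wF // oppr0 maxxx.
- by move=> x; rewrite le_max lexx orbT.
rewrite (T_pos0 cp) ?scaler0 ?addr0 //.
- by move=> x; rewrite le_max lexx orbT.
- by move=> x Fx; rewrite wF // maxxx.
Qed.

Lemma T_van0 (g : X -> R[i]) : cts g -> (forall x, F x -> g x = 0) -> T g = 0.
Proof.
case=> cr ci gF.
rewrite (_ : g = fun x => 'i%C * (complex.Im (g x))%:C%C + (complex.Re (g x))%:C%C); last first.
  apply/funext => x; case: (g x) => a b; apply/eqP; by rewrite eq_complex /= !mul0r !mul1r ?subr0 ?add0r ?addr0 ?eqxx.
rewrite (T_lin hT) ?T_real0 ?scaler0 ?addr0 //; try exact: cts_real.
- by move=> x Fx; rewrite gF.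
- by move=> x Fx; rewrite gF.
Qed.

Hypothesis cX : compact [set: X].

Lemma ury (x : X) : F x -> exists h : X -> R,
  [/\ continuous h, forall y, 0 <= h y, h x = 1 & forall y, F y -> y != x -> h y = 0].
Proof.
move=> Fx.
have nX : normal_space X := compact_normal hX cX.
have cA : closed (F `\ x) by apply: fin_closed; exact: finite_setD.
have cB : closed [set x] by apply: accessible_closed_set1; exact: hausdorff_accessible.
have dis : (F `\ x) `&` [set x] = set0.
  by apply/seteqP; split => // y [[_ /= yx] /= yx']; exact: yx.
have sep := (@normal_separatorP R X).1 nX _ _ cA cB dis.
have [f [cf f01 fA fB]] := (@uniform_separatorP X R _ _).1 sep.
exists f; split => //.
- move=> y; have := f01 (f y) (ex_intro2 _ _ y I erefl).
  by rewrite /= in_itv /= => /andP[].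
- by apply: fB; exists x.
- move=> y Fy yx; apply: fA; exists y => //; split => //= yx'.
  by move: yx; rewrite yx' eqxx.
Qed.

Lemma part1_sep : separable_map ip hs e T.
Proof.
have : forall x, exists h : X -> R, [/\ continuous h, forall y, 0 <= h y &
    F x -> h x = 1 /\ forall y, F y -> y != x -> h y = 0].
  move=> x; have [Fx|nFx] := pselect (F x).
    by have [h [? ? ? ?]] := ury Fx; exists h.
  by exists (fun _ => 0); split => // ; exact: cst_continuous.
case/choice => hh hhP.
have sF : forall x, x \in enum_fset (fset_set F) <-> F x.
  move=> x; rewrite -[x \in enum_fset _]/(x \in fset_set F) (in_fset_set fF).
  by split => [/set_mem|/mem_set].
apply: (@sep_of_list R X H ip hs e T (enum_fset (fset_set F)) (fun x => T (fun y => (hh x y)%:C%C))) => //.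
  move=> x _; have [ch h0 _] := hhP x.
  by case: hT => _ [_]; apply; [exact: cts_real | move=> y; rewrite ler0c].
move=> v cv.
set w := fun y => \sum_(x <- enum_fset (fset_set F)) v x * (hh x y)%:C%C.
have cw : cts w.
  by apply: cts_sum => x; have [ch _ _] := hhP x; exact: cts_real.
have cg : cts (fun y => v y + (-1) * w y).
  by apply: ctsD => //; apply: ctsM => //; exact: cts_cst.
have gF : forall y, F y -> v y + (-1) * w y = 0.
  move=> y Fy; suff -> : w y = v y by rewrite mulN1r subrr.
  rewrite /w (bigD1_seq y) /=; first last.
  + exact: fset_uniq.
  + by apply/sF.
  have [_ _ /(_ Fy) [-> hy]] := hhP y.
  rewrite big_seq_cond big1 ?mulr1 ?addr0 //.
  move=> x /andP[/sF Fx xy]; have [_ _ /(_ Fx) [_ hx]] := hhP x.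
  by rewrite hx ?mulr0 // eq_sym.
have -> : T v = T (fun y => 1 * (v y + (-1) * w y) + w y).
  by congr T; apply/funext => y; rewrite mul1r mulN1r subrK.
rewrite (T_lin hT) // (T_van0 cg gF) scaler0 add0r /w (T_sum hT) //.
by move=> x; have [ch _ _] := hhP x; exact: cts_real.
Qed.

End Part1.

Theorem mainTheorem15 (R : realType) (H : lmodType R[i])
    (ip : H -> H -> R[i]) (hs : H -> H) (e : H) :
  hilbert_star_space ip hs -> unital_vector ip hs e ->
  (forall (X : ptopologicalType) (T : (X -> R[i]) -> H),
     hausdorff_space X -> compact [set: X] ->
     unital_positive ip hs e T ->
     assoc_measure_finite_atomic ip e T ->
     separable_map ip hs e T) /\
  (forall (n : nat) (T : (linfty n -> R[i]) -> H), (0 < n)%N ->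
     @unital_positive R (linfty n) H ip hs e T ->
     @separable_map R (linfty n) H ip hs e T /\
     forall (m : nat) (v : 'I_m -> 'I_m -> linfty n -> R[i]),
       (forall t : linfty n, psd (fun i j => v i j t)) ->
       max_cone_e ip hs e (fun i j => T (v i j))).

Proof.
move=> hH _; split.
  move=> X T hX cX hT [mu [_ [_ [hmu [F [fF muF]]]]]].
  exact: (part1_sep hH hX hT hmu fF muF cX).
move=> n T _ hT; split; first exact: (part2_sep hH hT).
by move=> m v hv; exact: (part2_max hH hT hv).
Qed.
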